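(* Let $0<|q|<1$ and let $a,b$ be complex numbers with $aq^j\neq1$ for all integers $j\ge0$. Then \[ \frac{(-bq;q)_\infty\,(abq;q)_\infty}{(-q;q)_\infty\,(a;q)_\infty}=\sum_{k=0}^\infty\frac{(b;q)_k}{(q;q)_k}\,\frac{(ab^2q^{2+k};q^2)_\infty}{(aq^k;q^2)_\infty}\,(-1)^kq^k . \]
   Context: For $0<|q|<1$ and base $p\in\{q,q^2\}$: $(x;p)_\infty=\prod_{j\ge0}(1-xp^j)$ and $(x;p)_k=(x;p)_\infty/(xp^k;p)_\infty$. *)

(* Defs.v *)
From Stdlib Require Import Reals.
From Coquelicot Require Import Coquelicot.
Open Scope C_scope.

Fixpoint qpoch (x p : C) (k : nat) : C :=
  match k with
  | O => 1
  | S k' => qpoch x p k' * (1 - x * p ^ k')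
  end.

Definition qpoch_inf (x p : C) : C :=
  @lim (CompleteNormedModule.CompleteSpace _ C_CompleteNormedModule) (filtermap (qpoch x p) eventually).

(* Main.v *)
Require Import Defs.
From Stdlib Require Import Reals Lra Lia.
From Coquelicot Require Import Coquelicot.
Open Scope C_scope.

Definition Ccv (u : nat -> C) (l : C) : Prop :=
  forall eps : R, (0 < eps)%R -> exists N : nat, forall n : nat, (N <= n)%nat -> (Cmod (u n - l) < eps)%R.

Lemma Ccv_filterlim u l : Ccv u l <-> filterlim u eventually (locally l).
Proof.
  rewrite (filterlim_locally_ball_norm (K:=C_AbsRing) (U:=C_NormedModule)).
  split.
  - intros H eps. destruct (H eps (cond_pos eps)) as [N HN].
    exists N. intros n Hn. exact (HN n Hn).
  - intros H eps Heps. destruct (H (mkposreal eps Heps)) as [N HN].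
    exists N. intros n Hn. exact (HN n Hn).
Qed.

Lemma Ccv_plus u v l m : Ccv u l -> Ccv v m -> Ccv (fun n => u n + v n) (l + m).
Proof.
  rewrite !Ccv_filterlim. intros Hu Hv.
  apply (filterlim_comp_2 u v (fun x y => @plus C_NormedModule x y) Hu Hv).
  apply (filterlim_plus (K:=C_AbsRing) (V:=C_NormedModule)).
Qed.

Lemma Cmod_sub_tri x y z : (Cmod (x - z) <= Cmod (x - y) + Cmod (y - z))%R.
Proof. replace (x - z) with ((x - y) + (y - z)) by ring. apply Cmod_triangle. Qed.

Lemma Cmod_le_sub x y : (Cmod x <= Cmod y + Cmod (x - y))%R.
Proof. replace x with (y + (x - y)) at 1 by ring. apply Cmod_triangle. Qed.

Lemma Ccv_mult u v l m : Ccv u l -> Ccv v m -> Ccv (fun n => u n * v n) (l * m).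
Proof.
  intros Hu Hv eps He.
  assert (Hl := Cmod_ge_0 l). assert (Hm := Cmod_ge_0 m).
  destruct (Hu (eps / (4 * (Cmod m + 1)))%R) as [N1 H1].
  { apply Rdiv_lt_0_compat; lra. }
  destruct (Hv (Rmin 1 (eps / (4 * (Cmod l + 1))))%R) as [N2 H2].
  { apply Rmin_glb_lt; [lra|]. apply Rdiv_lt_0_compat; lra. }
  exists (max N1 N2). intros n Hn.
  specialize (H1 n ltac:(lia)). specialize (H2 n ltac:(lia)).
  assert (Hv1 : (Cmod (v n - m) < 1)%R) by (eapply Rlt_le_trans; [exact H2| apply Rmin_l]).
  assert (Hv2 : (Cmod (v n - m) < eps / (4 * (Cmod l + 1)))%R) by (eapply Rlt_le_trans; [exact H2| apply Rmin_r]).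
  assert (Hvb : (Cmod (v n) <= Cmod m + 1)%R) by (pose proof (Cmod_le_sub (v n) m); lra).
  replace (u n * v n - l * m) with ((u n - l) * v n + l * (v n - m)) by ring.
  eapply Rle_lt_trans; [apply Cmod_triangle|]. rewrite !Cmod_mult.
  assert (A1 : (Cmod (u n - l) * Cmod (v n) <= eps / (4 * (Cmod m + 1)) * (Cmod m + 1))%R).
  { apply Rmult_le_compat; try apply Cmod_ge_0; lra. }
  assert (A2 : (Cmod l * Cmod (v n - m) <= (Cmod l + 1) * (eps / (4 * (Cmod l + 1))))%R).
  { apply Rmult_le_compat; try apply Cmod_ge_0; lra. }
  assert (E1 : (eps / (4 * (Cmod m + 1)) * (Cmod m + 1) = eps / 4)%R) by (field; lra).
  assert (E2 : ((Cmod l + 1) * (eps / (4 * (Cmod l + 1))) = eps / 4)%R) by (field; lra).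
  lra.
Qed.

Lemma Ccv_const c : Ccv (fun _ => c) c.
Proof. intros eps He. exists O. intros n _. replace (c - c) with (RtoC 0) by ring. rewrite Cmod_0. lra. Qed.

Lemma Ccv_unique u l m : Ccv u l -> Ccv u m -> l = m.
Proof.
  rewrite !Ccv_filterlim. intros H1 H2.
  apply (filterlim_locally_unique (K:=C_AbsRing) (V:=C_NormedModule) u l m H1 H2).
Qed.

Definition Clim (u : nat -> C) : C :=
  @lim (CompleteNormedModule.CompleteSpace _ C_CompleteNormedModule) (filtermap u eventually).

Lemma qpoch_inf_Clim x p : qpoch_inf x p = Clim (qpoch x p).
Proof. reflexivity. Qed.

Lemma Cauchy_Ccv (u : nat -> C) :
  (forall eps : R, (0 < eps)%R -> exists N, forall n m, (N <= n)%nat -> (N <= m)%nat -> (Cmod (u n - u m) < eps)%R) ->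
  Ccv u (Clim u).
Proof.
  intros H.
  assert (HP : ProperFilter (filtermap u eventually)).
  { apply filtermap_proper_filter. apply eventually_filter. }
  assert (HC : cauchy (filtermap u eventually)).
  { intros eps. destruct (H eps (cond_pos eps)) as [N HN].
    exists (u N). exists N. intros n Hn.
    apply C_NormedModule_mixin_compat1. apply HN; lia. }
  pose proof (complete_cauchy (T:=CompleteNormedModule.CompleteSpace _ C_CompleteNormedModule) _ HP HC) as K.
  intros eps He.
  assert (He2 : (0 < eps / 2)%R) by lra.
  destruct (K (mkposreal _ He2)) as [N HN].
  exists N. intros n Hn. specialize (HN n Hn).
  apply C_NormedModule_mixin_compat2 in HN. simpl in HN.
  assert (sqrt 2 < 2)%R.
  { pose proof (sqrt_sqrt 2 ltac:(lra)). pose proof (sqrt_pos 2). nra. }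
  unfold minus in HN. simpl in HN.
  eapply Rlt_le_trans; [exact HN|]. 
  assert (0 <= sqrt 2)%R by apply sqrt_pos. nra.
Qed.

Lemma Ccv_Cauchy u l : Ccv u l ->
  forall eps : R, (0 < eps)%R -> exists N, forall n m, (N <= n)%nat -> (N <= m)%nat -> (Cmod (u n - u m) < eps)%R.
Proof.
  intros H eps He.
  destruct (H (eps/2)%R ltac:(lra)) as [N HN]. exists N. intros n m Hn Hm.
  eapply Rle_lt_trans; [apply (Cmod_sub_tri _ l)|].
  replace (l - u m) with (-(u m - l)) by ring. rewrite Cmod_opp.
  pose proof (HN n Hn). pose proof (HN m Hm). lra.
Qed.

Lemma Ccv_Clim u l : Ccv u l -> Clim u = l.
Proof.
  intros H. apply (Ccv_unique u). 2: exact H.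
  apply Cauchy_Ccv. apply (Ccv_Cauchy u l H).
Qed.

Lemma Ccv_shift u l k : Ccv u l -> Ccv (fun n => u (n + k)%nat) l.
Proof. intros H eps He. destruct (H eps He) as [N HN]. exists N. intros n Hn. apply HN. lia. Qed.

Lemma Ccv_ext u v l : (forall n, u n = v n) -> Ccv u l -> Ccv v l.
Proof. intros E H eps He. destruct (H eps He) as [N HN]. exists N. intros n Hn. rewrite <- E. auto. Qed.

Lemma Ccv_ext_ev u v l N0 : (forall n, (N0 <= n)%nat -> u n = v n) -> Ccv u l -> Ccv v l.
Proof. intros E H eps He. destruct (H eps He) as [N HN]. exists (max N N0). intros n Hn. rewrite <- E by lia. apply HN; lia. Qed.

Lemma Ccv_scal c u l : Ccv u l -> Ccv (fun n => c * u n) (c * l).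
Proof. intros H. apply (Ccv_mult (fun _ => c)); [apply Ccv_const|exact H]. Qed.

Lemma Ccv_minus u v l m : Ccv u l -> Ccv v m -> Ccv (fun n => u n - v n) (l - m).
Proof.
  intros Hu Hv. apply (Ccv_ext (fun n => u n + (-1) * v n)). { intros; ring. }
  replace (l - m) with (l + (-1) * m) by ring. apply Ccv_plus; auto. apply Ccv_scal; auto.
Qed.

Lemma Ccv_le u l c B N0 : Ccv u l -> (forall n, (N0 <= n)%nat -> (Cmod (u n - c) <= B)%R) -> (Cmod (l - c) <= B)%R.
Proof.
  intros H Hb. apply Rnot_lt_le. intros Hlt.
  destruct (H (Cmod (l - c) - B)%R ltac:(lra)) as [N HN].
  specialize (HN (max N N0) ltac:(lia)). specialize (Hb (max N N0) ltac:(lia)).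
  pose proof (Cmod_sub_tri l (u (max N N0)) c).
  replace (l - u (max N N0)) with (-(u (max N N0) - l)) in H0 by ring. rewrite Cmod_opp in H0. lra.
Qed.

Lemma Ccv_zero_const u c : Ccv u 0 -> (forall n, Cmod (u n) = c) -> c = 0%R.
Proof.
  intros H E. assert (c >= 0)%R. { rewrite <- (E O). apply Rle_ge, Cmod_ge_0. }
  apply Rle_antisym; [|lra]. apply Rnot_lt_le. intros Hc.
  destruct (H c Hc) as [N HN]. specialize (HN N (le_n _)). replace (u N - 0) with (u N) in HN by ring. rewrite E in HN. lra.
Qed.

Definition Ep (r t : R) : R := (exp (t / (1 - r)) - 1)%R.

Lemma qpoch_add x p n m : qpoch x p (n + m) = qpoch x p n * qpoch (x * p ^ n) p m.
Proof.
  induction m as [|m IH].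
  - rewrite Nat.add_0_r. simpl. ring.
  - rewrite Nat.add_succ_r. simpl. rewrite IH, Cpow_add_r. ring.
Qed.

Lemma pow_small (r c d : R) : (0 <= r < 1)%R -> (0 <= c)%R -> (0 < d)%R ->
  exists N, forall n, (N <= n)%nat -> (c * r ^ n < d)%R.
Proof.
  intros Hr Hc Hd.
  destruct (pow_lt_1_zero r ltac:(rewrite Rabs_right; lra) (d / (c + 1))%R) as [N HN].
  { apply Rdiv_lt_0_compat; lra. }
  exists N. intros n Hn. specialize (HN n Hn). rewrite Rabs_right in HN.
  2: { apply Rle_ge, pow_le; lra. }
  assert (0 <= r ^ n)%R by (apply pow_le; lra).
  apply Rmult_lt_compat_l with (r := (c+1)%R) in HN; [|lra].
  replace ((c + 1) * (d / (c + 1)))%R with d in HN by (field; lra). nra.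
Qed.

Lemma Ep_nonneg r t : (r < 1)%R -> (0 <= t)%R -> (0 <= Ep r t)%R.
Proof.
  intros Hr Ht. unfold Ep. assert (0 <= t / (1 - r))%R by (apply Rdiv_le_0_compat; lra).
  pose proof (exp_ineq1_le (t / (1 - r))). lra.
Qed.

Lemma Ep_mono r t s : (r < 1)%R -> (t <= s)%R -> (Ep r t <= Ep r s)%R.
Proof.
  intros Hr Hts. unfold Ep. assert (t / (1 - r) <= s / (1 - r))%R.
  { unfold Rdiv. apply Rmult_le_compat_r; [|lra]. left; apply Rinv_0_lt_compat; lra. }
  destruct H. { pose proof (exp_increasing _ _ H). lra. } rewrite H. lra.
Qed.

Lemma Ep_small r eps : (r < 1)%R -> (0 < eps)%R -> exists d, (0 < d)%R /\ forall t, (0 <= t < d)%R -> (Ep r t < eps)%R.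
Proof.
  intros Hr He. exists ((1 - r) * ln (1 + eps))%R. split.
  - apply Rmult_lt_0_compat; [lra|]. rewrite <- ln_1. apply ln_increasing; lra.
  - intros t Ht. unfold Ep.
    assert (t / (1 - r) < ln (1 + eps))%R.
    { apply (Rmult_lt_reg_l (1 - r)); [lra|]. replace ((1 - r) * (t / (1 - r)))%R with t by (field; lra). lra. }
    apply exp_increasing in H. rewrite exp_ln in H by lra. lra.
Qed.

Lemma qpoch_bound0 y p m : (Cmod p < 1)%R ->
  (Cmod (qpoch y p m - 1) <= exp (Cmod y * (1 - Cmod p ^ m) / (1 - Cmod p)) - 1)%R.
Proof.
  intros Hp. induction m as [|m IH].
  - simpl. replace (1 - 1) with (RtoC 0) by ring. rewrite Cmod_0.
    replace (Cmod y * (1 - 1) / (1 - Cmod p))%R with 0%R by (field; lra). rewrite exp_0. lra.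
  - simpl qpoch. set (Q := qpoch y p m) in *.
    set (S0 := (Cmod y * (1 - Cmod p ^ m) / (1 - Cmod p))%R)  in *.
    set (t := (Cmod y * Cmod p ^ m)%R).
    replace (Q * (1 - y * p ^ m) - 1) with ((Q - 1) + (- (y * p ^ m)) * Q) by ring.
    eapply Rle_trans; [apply Cmod_triangle|]. rewrite Cmod_mult, Cmod_opp, Cmod_mult, Cmod_pow.
    assert (HQ : (Cmod Q <= exp S0)%R) by (pose proof (Cmod_le_sub Q 1); rewrite Cmod_1 in H; lra).
    assert (Ht : (0 <= t)%R) by (unfold t; apply Rmult_le_pos; [apply Cmod_ge_0|apply pow_le, Cmod_ge_0]).
    assert (E : (Cmod y * (1 - Cmod p ^ (S m)) / (1 - Cmod p) = S0 + t)%R).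
    { unfold S0, t. simpl. field. lra. }
    rewrite E, exp_plus.
    assert (exp S0 * (1 + t) <= exp S0 * exp t)%R.
    { apply Rmult_le_compat_l; [left; apply exp_pos| apply exp_ineq1_le]. }
    fold t. assert (t * Cmod Q <= t * exp S0)%R by (apply Rmult_le_compat_l; lra). nra.
Qed.

Lemma qpoch_bound y p m : (Cmod p < 1)%R -> (Cmod (qpoch y p m - 1) <= Ep (Cmod p) (Cmod y))%R.
Proof.
  intros Hp. eapply Rle_trans; [apply qpoch_bound0; auto|]. unfold Ep.
  assert (Cmod y * (1 - Cmod p ^ m) / (1 - Cmod p) <= Cmod y / (1 - Cmod p))%R.
  { unfold Rdiv. apply Rmult_le_compat_r; [left; apply Rinv_0_lt_compat; lra|].
    pose proof (pow_le (Cmod p) m (Cmod_ge_0 p)). pose proof (Cmod_ge_0 y). nra. }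
  destruct H. { pose proof (exp_increasing _ _ H). lra. } rewrite H. lra.
Qed.

Lemma qpoch_abs_bound y p m : (Cmod p < 1)%R -> (Cmod (qpoch y p m) <= 1 + Ep (Cmod p) (Cmod y))%R.
Proof.
  intros Hp. pose proof (Cmod_le_sub (qpoch y p m) 1). rewrite Cmod_1 in H.
  pose proof (qpoch_bound y p m Hp). lra.
Qed.

Lemma qpoch_cv x p : (Cmod p < 1)%R -> Ccv (qpoch x p) (qpoch_inf x p).
Proof.
  intros Hp. rewrite qpoch_inf_Clim. apply Cauchy_Ccv.
  intros eps He. set (M := (1 + Ep (Cmod p) (Cmod x))%R).
  assert (HM : (1 <= M)%R) by (unfold M; pose proof (Ep_nonneg (Cmod p) (Cmod x) Hp (Cmod_ge_0 x)); lra).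
  destruct (Ep_small (Cmod p) (eps / (2 * M)) Hp) as [d [Hd Hd']]. { apply Rdiv_lt_0_compat; lra. }
  destruct (pow_small (Cmod p) (Cmod x) d) as [N HN]; auto. { split; [apply Cmod_ge_0|lra]. } { apply Cmod_ge_0. }
  exists N.
  assert (K : forall n, (N <= n)%nat -> (Cmod (qpoch x p n - qpoch x p N) < eps / 2)%R).
  { intros n Hn. destruct (Nat.le_exists_sub N n Hn) as [k [Hk _]]. subst n.
    rewrite Nat.add_comm, qpoch_add.
    replace (qpoch x p N * qpoch (x * p ^ N) p k - qpoch x p N) with (qpoch x p N * (qpoch (x * p ^ N) p k - 1)) by ring.
    rewrite Cmod_mult.
    assert (A : (Cmod (qpoch (x * p ^ N) p k - 1) < eps / (2 * M))%R).
    { eapply Rle_lt_trans; [apply qpoch_bound; auto|]. apply Hd'. rewrite Cmod_mult, Cmod_pow.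
      split; [apply Rmult_le_pos; [apply Cmod_ge_0|apply pow_le, Cmod_ge_0]|]. apply HN. lia. }
    assert (B : (Cmod (qpoch x p N) <= M)%R) by (apply qpoch_abs_bound; auto).
    assert (E : (M * (eps / (2 * M)) = eps / 2)%R) by (field; lra).
    pose proof (Cmod_ge_0 (qpoch (x * p ^ N) p k - 1)).
    pose proof (Cmod_ge_0 (qpoch x p N)).
    assert (Cmod (qpoch x p N) * Cmod (qpoch (x * p ^ N) p k - 1) <= M * Cmod (qpoch (x * p ^ N) p k - 1))%R
      by (apply Rmult_le_compat_r; lra).
    assert (M * Cmod (qpoch (x * p ^ N) p k - 1) < M * (eps / (2 * M)))%R by (apply Rmult_lt_compat_l; lra).
    lra. }
  intros n m Hn Hm. eapply Rle_lt_trans; [apply (Cmod_sub_tri _ (qpoch x p N))|].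
  replace (qpoch x p N - qpoch x p m) with (-(qpoch x p m - qpoch x p N)) by ring. rewrite Cmod_opp.
  pose proof (K n Hn). pose proof (K m Hm). lra.
Qed.

Lemma qpoch_inf_bound y p : (Cmod p < 1)%R -> (Cmod (qpoch_inf y p - 1) <= Ep (Cmod p) (Cmod y))%R.
Proof. intros Hp. apply (Ccv_le (qpoch y p) _ _ _ O (qpoch_cv y p Hp)). intros; apply qpoch_bound; auto. Qed.

Lemma qpoch_inf_shift x p n : (Cmod p < 1)%R -> qpoch_inf x p = qpoch x p n * qpoch_inf (x * p ^ n) p.
Proof.
  intros Hp. apply (Ccv_unique (fun m => qpoch x p (m + n))).
  - apply Ccv_shift. apply qpoch_cv; auto.
  - apply (Ccv_ext (fun m => qpoch x p n * qpoch (x * p ^ n) p m)).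
    { intros m. rewrite Nat.add_comm, qpoch_add. reflexivity. }
    apply Ccv_scal. apply qpoch_cv; auto.
Qed.

Lemma qpoch_inf_1 x p : (Cmod p < 1)%R -> qpoch_inf x p = (1 - x) * qpoch_inf (x * p) p.
Proof. intros Hp. rewrite (qpoch_inf_shift x p 1 Hp). simpl. f_equal; [ring|]. f_equal. ring. Qed.

Lemma qpoch_nz x p n : (forall j, (j < n)%nat -> x * p ^ j <> 1) -> qpoch x p n <> 0.
Proof.
  induction n as [|n IH]; intros H; simpl.
  - apply C1_nz.
  - apply Cmult_neq_0. { apply IH; intros; apply H; lia. }
    intros E. apply (H n (Nat.lt_succ_diag_r n)). apply Ceq_minus in E.
    replace (1 - x * p ^ n - 0) with (-(x * p ^ n - 1)) in E by ring.
    apply Ceq_minus. replace (x * p ^ n - 1) with (- (1 - x * p ^ n)) by ring. rewrite E. ring.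
Qed.

Lemma qpoch_inf_nz x p : (Cmod p < 1)%R -> (forall j, x * p ^ j <> 1) -> qpoch_inf x p <> 0.
Proof.
  intros Hp H.
  destruct (Ep_small (Cmod p) 1 Hp) as [d [Hd Hd']]; [lra|].
  destruct (pow_small (Cmod p) (Cmod x) d) as [N HN]; auto. { split; [apply Cmod_ge_0|lra]. } { apply Cmod_ge_0. }
  rewrite (qpoch_inf_shift x p N Hp). apply Cmult_neq_0.
  - apply qpoch_nz. intros; auto.
  - intros E. pose proof (qpoch_inf_bound (x * p ^ N) p Hp). rewrite E in H0.
    replace (0 - 1) with (-(1)) in H0 by ring. rewrite Cmod_opp, Cmod_1 in H0.
    assert (Ep (Cmod p) (Cmod (x * p ^ N)) < 1)%R.
    { apply Hd'. rewrite Cmod_mult, Cmod_pow. split; [apply Rmult_le_pos; [apply Cmod_ge_0|apply pow_le, Cmod_ge_0]|]. apply HN; lia. }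
    lra.
Qed.

Fixpoint psum (f : nat -> C) (n : nat) : C :=
  match n with O => 0 | S n => psum f n + f n end.

Lemma psum_ext f g n : (forall k, f k = g k) -> psum f n = psum g n.
Proof. intros E. induction n; simpl; congruence. Qed.

Lemma psum_geom f K r : (0 <= r < 1)%R -> (forall k, (Cmod (f k) <= K * r ^ k)%R) ->
  forall n j, (Cmod (psum f (n + j) - psum f n) <= K * (r ^ n - r ^ (n + j)) / (1 - r))%R.
Proof.
  intros Hr Hf n j. induction j as [|j IH].
  - rewrite Nat.add_0_r. replace (psum f n - psum f n) with (RtoC 0) by ring. rewrite Cmod_0.
    replace (K * (r ^ n - r ^ n) / (1 - r))%R with 0%R by (field; lra). lra.
  - rewrite Nat.add_succ_r. simpl psum.
    replace (psum f (n + j) + f (n + j)%nat - psum f n) with ((psum f (n + j) - psum f n) + f (n + j)%nat) by ring.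
    eapply Rle_trans; [apply Cmod_triangle|]. specialize (Hf (n + j)%nat).
    replace (K * (r ^ n - r ^ S (n + j)) / (1 - r))%R with (K * (r ^ n - r ^ (n + j)) / (1 - r) + K * r ^ (n + j))%R.
    + lra.
    + simpl. field. lra.
Qed.

Lemma psum_geom2 f K r : (0 <= r < 1)%R -> (forall k, (Cmod (f k) <= K * r ^ k)%R) ->
  forall n m, (n <= m)%nat -> (Cmod (psum f m - psum f n) <= K * r ^ n / (1 - r))%R.
Proof.
  intros Hr Hf n m Hnm. destruct (Nat.le_exists_sub n m Hnm) as [j [Hj _]]. subst m.
  rewrite Nat.add_comm. eapply Rle_trans; [apply (psum_geom f K r Hr Hf)|].
  assert (0 <= K)%R. { specialize (Hf O). simpl in Hf. pose proof (Cmod_ge_0 (f O)). lra. }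
  assert (0 <= r ^ (n + j))%R by (apply pow_le; lra).
  unfold Rdiv. apply Rmult_le_compat_r; [left; apply Rinv_0_lt_compat; lra|]. nra.
Qed.

Lemma psum_bound0 f K r : (0 <= r < 1)%R -> (forall k, (Cmod (f k) <= K * r ^ k)%R) ->
  forall m, (Cmod (psum f m) <= K / (1 - r))%R.
Proof.
  intros Hr Hf m. pose proof (psum_geom2 f K r Hr Hf O m ltac:(lia)). simpl in H.
  replace (psum f m - 0) with (psum f m) in H by ring. rewrite Rmult_1_r in H. exact H.
Qed.

Lemma psum_cv f K r : (0 <= r < 1)%R -> (forall k, (Cmod (f k) <= K * r ^ k)%R) ->
  Ccv (psum f) (Clim (psum f)).
Proof.
  intros Hr Hf. apply Cauchy_Ccv. intros eps He.
  assert (0 <= K)%R. { specialize (Hf O). simpl in Hf. pose proof (Cmod_ge_0 (f O)). lra. }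
  destruct (pow_small r (2 * K / (1 - r)) eps Hr) as [N HN]; auto.
  { apply Rdiv_le_0_compat; lra. }
  exists N. intros n m Hn Hm.
  eapply Rle_lt_trans; [apply (Cmod_sub_tri _ (psum f N))|].
  replace (psum f N - psum f m) with (-(psum f m - psum f N)) by ring. rewrite Cmod_opp.
  pose proof (psum_geom2 f K r Hr Hf N n Hn). pose proof (psum_geom2 f K r Hr Hf N m Hm).
  specialize (HN N (le_n _)).
  assert (2 * K / (1 - r) * r ^ N = 2 * (K * r ^ N / (1 - r)))%R by (field; lra). lra.
Qed.

Lemma bounded_ev (f : nat -> R) n0 B : (forall k, (n0 <= k)%nat -> (f k <= B)%R) -> exists B', forall k, (f k <= B')%R.
Proof.
  revert B. induction n0 as [|n IH]; intros B H.
  - exists B. intros k. apply H. lia.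
  - apply (IH (Rmax B (f n))). intros k Hk. destruct (Nat.eq_dec k n).
    + subst. apply Rmax_r.
    + eapply Rle_trans; [apply H; lia| apply Rmax_l].
Qed.

Lemma iterate (q beta : C) (P : C -> Prop) (F : C -> C) w s0 :
  (Cmod q < 1)%R ->
  (forall x, P x -> P (x * q)) ->
  (forall x, P x -> (1 - x) * F x = (1 - beta * x) * F (x * q)) ->
  P w -> Ccv (fun N => F (w * q ^ N)) s0 ->
  qpoch_inf w q * F w = qpoch_inf (beta * w) q * s0.
Proof.
  intros Hq HP HF Hw Hcv.
  assert (HPn : forall N, P (w * q ^ N)).
  { induction N. { simpl. replace (w * 1) with w by ring. auto. }
    replace (w * q ^ S N) with (w * q ^ N * q) by (simpl; ring). auto. }
  assert (It : forall N, qpoch w q N * F w = qpoch (beta * w) q N * F (w * q ^ N)).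
  { induction N as [|N IH].
    - simpl. replace (w * 1) with w by ring. ring.
    - simpl. replace (w * (q * q ^ N)) with (w * q ^ N * q) by ring.
      transitivity ((qpoch w q N * F w) * (1 - w * q ^ N)); [ring|]. rewrite IH.
      transitivity (qpoch (beta * w) q N * ((1 - w * q ^ N) * F (w * q ^ N))); [ring|].
      rewrite (HF _ (HPn N)). ring. }
  apply (Ccv_unique (fun N => qpoch w q N * F w)).
  - apply (Ccv_mult _ (fun _ => F w)). apply qpoch_cv; auto. apply Ccv_const.
  - apply (Ccv_ext (fun N => qpoch (beta * w) q N * F (w * q ^ N))). { intros; symmetry; auto. }
    apply Ccv_mult; auto. apply qpoch_cv; auto.
Qed.

Lemma Cmod_small_ne1 y : (Cmod y < 1)%R -> y <> 1.
Proof. intros H E. rewrite E, Cmod_1 in H. lra. Qed.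

Lemma near1 p : (Cmod p < 1)%R -> forall eps, (0 < eps)%R -> exists d, (0 < d)%R /\
  forall y, (Cmod y < d)%R -> (Cmod (qpoch_inf y p - 1) < eps)%R /\ forall k, (Cmod (qpoch y p k - 1) < eps)%R.
Proof.
  intros Hp eps He. destruct (Ep_small (Cmod p) eps Hp He) as [d [Hd Hd']].
  exists d. split; auto. intros z Hz. split.
  - eapply Rle_lt_trans; [apply qpoch_inf_bound; auto|]. apply Hd'. split; auto. apply Cmod_ge_0.
  - intros k. eapply Rle_lt_trans; [apply qpoch_bound; auto|]. apply Hd'. split; auto. apply Cmod_ge_0.
Qed.

Lemma Cmod_qpow_small (x q : C) (d : R) : (Cmod q < 1)%R -> (0 < d)%R ->
  exists N, forall n, (N <= n)%nat -> (Cmod (x * q ^ n) < d)%R.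
Proof.
  intros Hq Hd. destruct (pow_small (Cmod q) (Cmod x) d) as [N HN]; auto.
  { split; [apply Cmod_ge_0|lra]. } { apply Cmod_ge_0. }
  exists N. intros n Hn. rewrite Cmod_mult, Cmod_pow. auto.
Qed.

Lemma qpoch_lower x p : (Cmod p < 1)%R -> (forall j, x * p ^ j <> 1) ->
  exists m n0, (0 < m)%R /\ forall k, (n0 <= k)%nat -> (m <= Cmod (qpoch x p k))%R.
Proof.
  intros Hp Hx. destruct (near1 p Hp (1/2)%R ltac:(lra)) as [d [Hd Hd']].
  destruct (Cmod_qpow_small x p d Hp Hd) as [n0 Hn0].
  exists (Cmod (qpoch x p n0) / 2)%R, n0. split.
  - apply Rdiv_lt_0_compat; [|lra]. apply Cmod_gt_0. apply qpoch_nz. auto.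
  - intros k Hk. destruct (Nat.le_exists_sub n0 k Hk) as [j [Hj _]]. subst k.
    rewrite Nat.add_comm, qpoch_add, Cmod_mult.
    destruct (Hd' (x * p ^ n0) (Hn0 n0 (le_n _))) as [_ H2]. specialize (H2 j).
    pose proof (Cmod_le_sub 1 (qpoch (x * p ^ n0) p j)). rewrite Cmod_1 in H.
    replace (1 - qpoch (x * p ^ n0) p j) with (-(qpoch (x * p ^ n0) p j - 1)) in H by ring.
    rewrite Cmod_opp in H. pose proof (Cmod_ge_0 (qpoch x p n0)). nra.
Qed.

Lemma pow_lt1 r n : (0 <= r < 1)%R -> (r * r ^ n < 1)%R.
Proof. intros H. pose proof (pow_lt_1_compat r (S n) H ltac:(lia)). simpl in H0. lra. Qed.

Lemma pow_le1 r n : (0 <= r < 1)%R -> (r ^ n <= 1)%R.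
Proof. intros H. destruct n. simpl; lra. pose proof (pow_lt1 r n H). simpl. lra. Qed.

Section QBinom.
Variables q b : C.
Hypothesis Hq : (Cmod q < 1)%R.

Lemma Hr : (0 <= Cmod q < 1)%R.
Proof. split; [apply Cmod_ge_0|exact Hq]. Qed.

Lemma qq_ne1 j : q * q ^ j <> 1.
Proof.
  apply Cmod_small_ne1. rewrite Cmod_mult, Cmod_pow. apply pow_lt1. apply Hr.
Qed.

Lemma qq_nz k : qpoch q q k <> 0.
Proof. apply qpoch_nz. intros. apply qq_ne1. Qed.

Definition dd k := qpoch b q k / qpoch q q k.

Lemma dd_bound : exists K, forall k, (Cmod (dd k) <= K)%R.
Proof.
  destruct (qpoch_lower q q Hq qq_ne1) as [m [n0 [Hm Hlow]]].
  apply (bounded_ev (fun k => Cmod (dd k)) n0 ((1 + Ep (Cmod q) (Cmod b)) / m)%R).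
  intros k Hk. unfold dd. rewrite Cmod_div by apply qq_nz.
  specialize (Hlow k Hk). pose proof (qpoch_abs_bound b q k Hq).
  pose proof (Cmod_ge_0 (qpoch b q k)).
  unfold Rdiv. apply Rmult_le_compat; auto.
  - left. apply Rinv_0_lt_compat. lra.
  - apply Rinv_le_contravar; lra.
Qed.

Lemma dd_rec k : dd (S k) * (1 - q * q ^ k) = dd k * (1 - b * q ^ k).
Proof.
  unfold dd. simpl. field. split.
  - apply qq_nz.
  - simpl. intros E. apply (qq_ne1 k). apply Ceq_minus. replace (q * q ^ k - 1) with (- (1 - q * q ^ k)) by ring. rewrite E. ring.
Qed.

Lemma dd0 : dd 0 = 1.
Proof. unfold dd. simpl. field. Qed.

Definition Tq w := Clim (psum (fun k => dd k * w ^ k)).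

Lemma Tq_term_bound K w : (forall k, (Cmod (dd k) <= K)%R) -> (Cmod w <= Cmod q)%R ->
  forall k, (Cmod (dd k * w ^ k) <= K * Cmod q ^ k)%R.
Proof.
  intros HK Hw k. rewrite Cmod_mult, Cmod_pow. apply Rmult_le_compat; try apply Cmod_ge_0; auto.
  apply pow_le, Cmod_ge_0. apply pow_incr. split; auto. apply Cmod_ge_0.
Qed.

Lemma Tq_cv w : (Cmod w <= Cmod q)%R -> Ccv (psum (fun k => dd k * w ^ k)) (Tq w).
Proof.
  intros Hw. destruct dd_bound as [K HK]. apply (psum_cv _ K (Cmod q) Hr). apply Tq_term_bound; auto.
Qed.

Lemma Tq_partial w n :
  psum (fun k => dd k * w ^ k) (S n) - psum (fun k => dd k * (w * q) ^ k) (S n)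
  = w * psum (fun k => dd k * w ^ k) n - b * w * psum (fun k => dd k * (w * q) ^ k) n.
Proof.
  induction n as [|n IH].
  - simpl. rewrite dd0. ring.
  - transitivity ((psum (fun k => dd k * w ^ k) (S n) - psum (fun k => dd k * (w * q) ^ k) (S n))
       + dd (S n) * (1 - q * q ^ n) * (w * w ^ n)).
    { simpl. rewrite Cpow_mult_l. simpl. ring. }
    rewrite IH, dd_rec. simpl. rewrite Cpow_mult_l. ring.
Qed.

Lemma Tq_rel w : (Cmod w <= Cmod q)%R -> (1 - w) * Tq w = (1 - b * w) * Tq (w * q).
Proof.
  intros Hw.
  assert (Hwq : (Cmod (w * q) <= Cmod q)%R).
  { rewrite Cmod_mult. pose proof Hr. pose proof (Cmod_ge_0 w). nra. }
  assert (E : Tq w - Tq (w * q) = w * Tq w - b * w * Tq (w * q)).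
  { apply (Ccv_unique (fun n => psum (fun k => dd k * w ^ k) (n + 1) - psum (fun k => dd k * (w * q) ^ k) (n + 1))).
    - apply Ccv_minus; apply Ccv_shift; apply Tq_cv; auto.
    - apply (Ccv_ext (fun n => w * psum (fun k => dd k * w ^ k) n - b * w * psum (fun k => dd k * (w * q) ^ k) n)).
      { intros n. rewrite Nat.add_1_r. symmetry. apply Tq_partial. }
      apply Ccv_minus; apply Ccv_scal; apply Tq_cv; auto. }
  apply Ceq_minus. apply Ceq_minus in E. rewrite <- E. ring.
Qed.

Lemma Tq_near w : (Cmod w <= Cmod q)%R -> exists K, (0 <= K)%R /\ forall w', (Cmod w' <= Cmod q)%R ->
  (Cmod (Tq w' - 1) <= K * Cmod w')%R.
Proof.
  intros _. destruct dd_bound as [K HK].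
  assert (HK0 : (0 <= K)%R) by (specialize (HK O); pose proof (Cmod_ge_0 (dd O)); lra).
  exists (K / (1 - Cmod q))%R. split. { apply Rdiv_le_0_compat; pose proof Hr; lra. }
  intros w' Hw'.
  assert (Hr' : (0 <= Cmod w' < 1)%R) by (split; [apply Cmod_ge_0| pose proof Hr; lra]).
  assert (Hb : forall k, (Cmod (dd k * w' ^ k) <= K * Cmod w' ^ k)%R).
  { intros k. rewrite Cmod_mult, Cmod_pow. apply Rmult_le_compat_r; auto. apply pow_le, Cmod_ge_0. }
  apply (Ccv_le _ _ _ _ 1 (Tq_cv w' Hw')).
  intros n Hn. pose proof (psum_geom2 _ K (Cmod w') Hr' Hb 1 n Hn).
  simpl psum in H. rewrite dd0 in H. replace (0 + 1 * 1) with (RtoC 1) in H by ring.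
  eapply Rle_trans; [exact H|]. rewrite pow_1.
  unfold Rdiv. rewrite Rmult_assoc, (Rmult_comm (Cmod w')), <- Rmult_assoc.
  apply Rmult_le_compat_r; [apply Cmod_ge_0|]. apply Rmult_le_compat_l; auto.
  apply Rinv_le_contravar; pose proof Hr; lra.
Qed.

Lemma qbinom w : (Cmod w <= Cmod q)%R -> qpoch_inf w q * Tq w = qpoch_inf (b * w) q.
Proof.
  intros Hw. rewrite <- (Cmult_1_r (qpoch_inf (b * w) q)).
  apply (iterate q b (fun x => Cmod x <= Cmod q)%R Tq w 1 Hq).
  - intros x Hx. rewrite Cmod_mult. pose proof Hr. pose proof (Cmod_ge_0 x). nra.
  - intros x Hx. apply Tq_rel; auto.
  - exact Hw.
  - destruct (Tq_near w Hw) as [K [HK0 HK]]. intros eps He.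
    destruct (Cmod_qpow_small w q (eps / (K + 1))%R Hq) as [N HN]. { apply Rdiv_lt_0_compat; lra. }
    exists N. intros n Hn.
    assert (Hwn : (Cmod (w * q ^ n) <= Cmod q)%R).
    { rewrite Cmod_mult, Cmod_pow. pose proof (pow_le1 (Cmod q) n Hr). apply Rle_trans with (Cmod q * 1)%R; [|lra].
      apply Rmult_le_compat; auto; [apply Cmod_ge_0|apply pow_le, Cmod_ge_0]. }
    eapply Rle_lt_trans; [apply HK; auto|]. specialize (HN n Hn).
    apply Rle_lt_trans with ((K + 1) * Cmod (w * q ^ n))%R. { pose proof (Cmod_ge_0 (w * q ^ n)). nra. }
    apply Rmult_lt_compat_l with (r := (K+1)%R) in HN; [|lra].
    replace ((K + 1) * (eps / (K + 1)))%R with eps in HN by (field; lra). exact HN.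
Qed.

End QBinom.

Lemma Ccv_geom0 u M r : (0 <= r < 1)%R -> (forall n, (Cmod (u n) <= M * r ^ n)%R) -> Ccv u 0.
Proof.
  intros Hr Hu eps He.
  assert (HM : (0 <= M)%R) by (specialize (Hu O); simpl in Hu; pose proof (Cmod_ge_0 (u O)); lra).
  destruct (pow_small r M eps Hr HM He) as [N HN]. exists N. intros n Hn.
  replace (u n - 0) with (u n) by ring. eapply Rle_lt_trans; [apply Hu|]. auto.
Qed.

Section Main.
Variables q b : C.
Hypothesis Hq : (Cmod q < 1)%R.

Definition cc k := dd q b k * ((-1) ^ k * q ^ k).
Definition rr x k := qpoch_inf (x * b ^ 2 * q ^ (2 + k)) (q ^ 2) / qpoch_inf (x * q ^ k) (q ^ 2).
Definition Good x := forall j, x * q ^ j <> 1.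

Lemma Hr0 : (0 <= Cmod q < 1)%R.
Proof. split; [apply Cmod_ge_0|exact Hq]. Qed.

Lemma Hq2 : (Cmod (q ^ 2) < 1)%R.
Proof. rewrite Cmod_pow. pose proof Hr0. simpl. nra. Qed.

Lemma good_q x : Good x -> Good (x * q).
Proof. intros H j. replace (x * q * q ^ j) with (x * q ^ (S j)) by (simpl; ring). apply H. Qed.

Lemma good_qN x N : Good x -> Good (x * q ^ N).
Proof. intros H j. rewrite <- Cmult_assoc, <- Cpow_add_r. apply H. Qed.

Lemma den_nz x k : Good x -> qpoch_inf (x * q ^ k) (q ^ 2) <> 0.
Proof.
  intros H. apply qpoch_inf_nz. apply Hq2. intros j.
  rewrite <- Cpow_mult_r, <- Cmult_assoc, <- Cpow_add_r. apply H.
Qed.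

Lemma rr_shift x k : rr x (S k) = rr (x * q) k.
Proof.
  unfold rr. f_equal; f_equal; simpl; ring.
Qed.

Lemma rr_shiftN x k N : rr x (k + N) = rr (x * q ^ N) k.
Proof.
  revert x k. induction N as [|N IH]; intros x k.
  - rewrite Nat.add_0_r. simpl. f_equal. ring.
  - rewrite Nat.add_succ_r, <- Nat.add_succ_l, IH, rr_shift. f_equal. simpl. ring.
Qed.

Lemma E2 x k : Good x -> (1 - x * q ^ k) * rr x k = (1 - x * b ^ 2 * q ^ (2 + k)) * rr x (S (S k)).
Proof.
  intros H. unfold rr.
  rewrite (qpoch_inf_1 (x * b ^ 2 * q ^ (2 + k)) (q ^ 2) Hq2).
  rewrite (qpoch_inf_1 (x * q ^ k) (q ^ 2) Hq2).
  replace (x * b ^ 2 * q ^ (2 + k) * q ^ 2) with (x * b ^ 2 * q ^ (2 + S (S k))) by (simpl; ring).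
  replace (x * q ^ k * q ^ 2) with (x * q ^ S (S k)) by (simpl; ring).
  assert (D := den_nz x (S (S k)) H).
  assert (Z : 1 - x * q ^ k <> 0).
  { intros E. apply (H k). apply Ceq_minus. replace (x * q ^ k - 1) with (-(1 - x * q ^ k)) by ring. rewrite E. ring. }
  field. auto.
Qed.

Lemma cc_rec k : cc (S k) * (1 - q * q ^ k) = - q * (1 - b * q ^ k) * cc k.
Proof.
  unfold cc. transitivity ((dd q b (S k) * (1 - q * q ^ k)) * ((-1) ^ S k * q ^ S k)); [ring|].
  rewrite dd_rec by exact Hq. simpl. ring.
Qed.

Lemma cc_bound : exists K, forall k, (Cmod (cc k) <= K * Cmod q ^ k)%R.
Proof.
  destruct (dd_bound q b Hq) as [K HK]. exists K. intros k. unfold cc.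
  rewrite !Cmod_mult, !Cmod_pow.
  replace (Cmod (-1)) with 1%R by (rewrite Cmod_R, Rabs_left; lra). rewrite pow1, Rmult_1_l.
  apply Rmult_le_compat_r; auto. apply pow_le, Cmod_ge_0.
Qed.

Lemma rr_near1 x : Good x -> forall eta, (0 < eta)%R -> exists N0, forall m, (N0 <= m)%nat -> (Cmod (rr x m - 1) <= eta)%R.
Proof.
  intros H eta He.
  set (eps := Rmin (1/2) (eta / 4)).
  assert (Heps : (0 < eps)%R) by (unfold eps; apply Rmin_glb_lt; lra).
  assert (Heps1 : (eps <= 1/2)%R) by apply Rmin_l.
  assert (Heps2 : (eps <= eta/4)%R) by apply Rmin_r.
  destruct (near1 (q ^ 2) Hq2 eps Heps) as [d [Hd Hd']].
  destruct (Cmod_qpow_small (x * b ^ 2 * q ^ 2) q d Hq Hd) as [N1 HN1].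
  destruct (Cmod_qpow_small x q d Hq Hd) as [N2 HN2].
  exists (max N1 N2). intros m Hm. unfold rr.
  set (Nu := qpoch_inf (x * b ^ 2 * q ^ (2 + m)) (q ^ 2)).
  set (De := qpoch_inf (x * q ^ m) (q ^ 2)).
  assert (A1 : (Cmod (Nu - 1) < eps)%R).
  { apply Hd'. replace (x * b ^ 2 * q ^ (2 + m)) with (x * b ^ 2 * q ^ 2 * q ^ m) by (rewrite Cpow_add_r; ring). apply HN1; lia. }
  assert (A2 : (Cmod (De - 1) < eps)%R) by (apply Hd'; apply HN2; lia).
  assert (A3 : (1/2 <= Cmod De)%R).
  { pose proof (Cmod_le_sub 1 De). rewrite Cmod_1 in H0.
    replace (1 - De) with (-(De - 1)) in H0 by ring. rewrite Cmod_opp in H0. lra. }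
  assert (DZ : De <> 0) by (intros E; rewrite E, Cmod_0 in A3; lra).
  replace (Nu / De - 1) with ((Nu - 1 - (De - 1)) / De) by (field; auto).
  rewrite Cmod_div by auto.
  assert (Cmod (Nu - 1 - (De - 1)) <= Cmod (Nu - 1) + Cmod (De - 1))%R.
  { unfold Cminus at 1. eapply Rle_trans; [apply Cmod_triangle|]. rewrite Cmod_opp. lra. }
  apply Rle_trans with ((2 * eps) / (1/2))%R.
  - unfold Rdiv. apply Rmult_le_compat; [apply Cmod_ge_0| left; apply Rinv_0_lt_compat; lra | lra |].
    apply Rinv_le_contravar; lra.
  - replace (2 * eps / (1 / 2))%R with (4 * eps)%R by field. lra.
Qed.

Lemma rr_bound x : Good x -> exists K, forall k, (Cmod (rr x k) <= K)%R.
Proof.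
  intros H. destruct (rr_near1 x H 1 ltac:(lra)) as [N0 HN0].
  apply (bounded_ev (fun k => Cmod (rr x k)) N0 2). intros k Hk.
  pose proof (HN0 k Hk). pose proof (Cmod_le_sub (rr x k) 1). rewrite Cmod_1 in H1. lra.
Qed.

Lemma term_bound x : Good x -> exists K, forall k, (Cmod (cc k * rr x k) <= K * Cmod q ^ k)%R.
Proof.
  intros H. destruct cc_bound as [K1 H1]. destruct (rr_bound x H) as [K2 H2].
  exists (K1 * K2)%R. intros k. rewrite Cmod_mult.
  specialize (H1 k). specialize (H2 k).
  assert (0 <= Cmod q ^ k)%R by (apply pow_le, Cmod_ge_0).
  replace (K1 * K2 * Cmod q ^ k)%R with ((K1 * Cmod q ^ k) * K2)%R by ring.
  apply Rmult_le_compat; auto; apply Cmod_ge_0.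
Qed.

Definition Sx x := Clim (psum (fun k => cc k * rr x k)).

Lemma S_cv x : Good x -> Ccv (psum (fun k => cc k * rr x k)) (Sx x).
Proof. intros H. destruct (term_bound x H) as [K HK]. apply (psum_cv _ K (Cmod q) Hr0 HK). Qed.

Definition V x j N := - cc N * (1 - q ^ N) * rr x (j + N).

Lemma partial_id x : Good x -> forall N,
  (1 - x) * psum (fun k => cc k * rr x k) N + x * q * (b - 1) * psum (fun k => cc k * rr x (S k)) N
  - (1 - x * b * q ^ 2) * psum (fun k => cc k * rr x (S (S k))) N
  = - x * V x 0 N + x * b * q * V x 1 N.
Proof.
  intros H N. induction N as [|N IH].
  - unfold V. simpl. ring.
  - cbn [psum].
    assert (H1 := cc_rec N). assert (H2 := E2 x N H).
    apply Ceq_minus. apply Ceq_minus in IH. apply Ceq_minus in H1. apply Ceq_minus in H2.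
    unfold V in *. simpl in *.
    set (P0 := psum (fun k => cc k * rr x k) N) in *.
    set (P1 := psum (fun k => cc k * rr x (S k)) N) in *.
    set (P2 := psum (fun k => cc k * rr x (S (S k))) N) in *.
    match type of IH with ?A = _ => match type of H1 with ?B = _ => match type of H2 with ?D = _ =>
      transitivity (A + cc N * D - (x * rr x (S N) - x * b * q * rr x (S (S N))) * B); [ring|]
    end end end.
    rewrite IH, H1, H2. ring.
Qed.

Lemma V_cv x j : Good x -> Ccv (fun N => V x j N) 0.
Proof.
  intros H. destruct cc_bound as [K1 H1]. destruct (rr_bound x H) as [K2 H2].
  apply (Ccv_geom0 _ (K1 * 2 * K2) (Cmod q) Hr0). intros n. unfold V.
  rewrite !Cmod_mult, Cmod_opp.
  assert (Cmod (1 - q ^ n) <= 2)%R.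
  { unfold Cminus. eapply Rle_trans; [apply Cmod_triangle|]. rewrite Cmod_opp, Cmod_1, Cmod_pow.
    pose proof (pow_le1 (Cmod q) n Hr0). lra. }
  specialize (H1 n). specialize (H2 (j + n)%nat).
  assert (0 <= Cmod q ^ n)%R by (apply pow_le, Cmod_ge_0).
  replace (K1 * 2 * K2 * Cmod q ^ n)%R with ((K1 * Cmod q ^ n) * 2 * K2)%R by ring.
  apply Rmult_le_compat; try apply Rmult_le_pos; try apply Cmod_ge_0; auto.
  apply Rmult_le_compat; try apply Cmod_ge_0; auto.
Qed.

Lemma Rel x : Good x ->
  (1 - x) * Sx x + x * q * (b - 1) * Sx (x * q) - (1 - x * b * q ^ 2) * Sx (x * q * q) = 0.
Proof.
  intros H. assert (Hq1 := good_q x H). assert (Hq2' := good_q _ Hq1).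
  apply (Ccv_unique (fun N => - x * V x 0 N + x * b * q * V x 1 N)).
  - apply (Ccv_ext (fun N => (1 - x) * psum (fun k => cc k * rr x k) N + x * q * (b - 1) * psum (fun k => cc k * rr x (S k)) N
      - (1 - x * b * q ^ 2) * psum (fun k => cc k * rr x (S (S k))) N)).
    { intros; apply partial_id; auto. }
    apply Ccv_minus; [apply Ccv_plus|]; apply Ccv_scal.
    + apply S_cv; auto.
    + apply (Ccv_ext (psum (fun k => cc k * rr (x * q) k))).
      { intros n. apply psum_ext. intros k. rewrite rr_shift. reflexivity. }
      apply S_cv; auto.
    + apply (Ccv_ext (psum (fun k => cc k * rr (x * q * q) k))).
      { intros n. apply psum_ext. intros k. rewrite !rr_shift. reflexivity. }
      apply S_cv; auto.
  - replace (0:C) with (- x * 0 + x * b * q * 0) by ring.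
    apply Ccv_plus; apply Ccv_scal; apply V_cv; auto.
Qed.

Definition Ex x := (1 - x) * Sx x - (1 - b * q * x) * Sx (x * q).

Lemma Ex_rel x : Good x -> Ex (x * q) = - Ex x.
Proof.
  intros H. pose proof (Rel x H). unfold Ex. apply Ceq_minus. rewrite <- H0. ring.
Qed.

Lemma Ex_const x N : Good x -> Cmod (Ex (x * q ^ N)) = Cmod (Ex x).
Proof.
  intros H. induction N as [|N IH].
  - simpl. replace (x * 1) with x by ring. reflexivity.
  - replace (x * q ^ S N) with (x * q ^ N * q) by (simpl; ring).
    rewrite Ex_rel by (apply good_qN; auto). rewrite Cmod_opp. exact IH.
Qed.

Definition C0 := Tq q b (- q).

Lemma Hmq : (Cmod (- q) <= Cmod q)%R.
Proof. rewrite Cmod_opp. lra. Qed.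

Lemma S_lim x : Good x -> Ccv (fun N => Sx (x * q ^ N)) C0.
Proof.
  intros H eps He.
  destruct cc_bound as [K1 H1].
  assert (HK1 : (0 <= K1)%R) by (specialize (H1 O); simpl in H1; pose proof (Cmod_ge_0 (cc O)); lra).
  set (eta := (eps * (1 - Cmod q) / (2 * (K1 + 1)))%R).
  assert (Heta : (0 < eta)%R).
  { unfold eta. apply Rdiv_lt_0_compat; [apply Rmult_lt_0_compat|]; pose proof Hr0; lra. }
  destruct (rr_near1 x H eta Heta) as [N0 HN0].
  exists N0. intros N HN.
  assert (HG := good_qN x N H).
  assert (B : (Cmod (Sx (x * q ^ N) - C0 - 0) <= K1 * eta / (1 - Cmod q))%R).
  { apply (Ccv_le (fun m => psum (fun k => cc k * rr (x * q ^ N) k) m - psum (fun k => dd q b k * (- q) ^ k) m) _ _ _ O).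
    - apply Ccv_minus. apply S_cv; auto. apply Tq_cv; auto. apply Hmq.
    - intros m _. replace (psum (fun k => cc k * rr (x * q ^ N) k) m - psum (fun k => dd q b k * (- q) ^ k) m - 0)
        with (psum (fun k => cc k * (rr (x * q ^ N) k - 1)) m).
      2: { induction m as [|m IHm]; cbn [psum]. ring. rewrite IHm. unfold cc.
           replace ((-q) ^ m) with ((-1) ^ m * q ^ m). ring. rewrite <- Cpow_mult_l. f_equal. ring. }
      apply (psum_bound0 _ (K1 * eta) (Cmod q) Hr0).
      intros k. rewrite Cmod_mult. rewrite <- rr_shiftN.
      specialize (H1 k). specialize (HN0 (k + N)%nat ltac:(lia)).
      replace (K1 * eta * Cmod q ^ k)%R with ((K1 * Cmod q ^ k) * eta)%R by ring.
      apply Rmult_le_compat; auto; apply Cmod_ge_0. }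
  replace (Sx (x * q ^ N) - C0 - 0) with (Sx (x * q ^ N) - C0) in B by ring.
  eapply Rle_lt_trans; [exact B|].
  unfold eta. apply Rle_lt_trans with (eps / 2)%R.
  - pose proof Hr0. unfold Rdiv. 
    replace (K1 * (eps * (1 - Cmod q) * / (2 * (K1 + 1))) * / (1 - Cmod q))%R with (eps / 2 * (K1 / (K1 + 1)))%R by (field; lra).
    assert (K1 / (K1 + 1) <= 1)%R. { apply Rmult_le_reg_r with (K1 + 1)%R; [lra|]. unfold Rdiv. rewrite Rmult_assoc, Rinv_l by lra. lra. }
    assert (0 <= K1 / (K1 + 1))%R by (apply Rdiv_le_0_compat; lra). nra.
  - lra.
Qed.

Lemma Ex_zero x : Good x -> Ex x = 0.
Proof.
  intros H. apply Cmod_eq_0.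
  apply (Ccv_zero_const (fun N => Ex (x * q ^ N))).
  2: { intros n. apply Ex_const; auto. }
  unfold Ex.
  replace (0:C) with ((1 - 0) * C0 - (1 - b * q * 0) * C0) by ring.
  assert (Hx : Ccv (fun N => x * q ^ N) 0).
  { apply (Ccv_geom0 _ (Cmod x) (Cmod q) Hr0). intros n. rewrite Cmod_mult, Cmod_pow. lra. }
  apply Ccv_minus; apply Ccv_mult.
  - apply Ccv_minus; [apply Ccv_const| exact Hx].
  - apply S_lim; auto.
  - apply Ccv_minus; [apply Ccv_const| apply Ccv_scal; exact Hx].
  - apply (Ccv_ext (fun N => Sx (x * q ^ (N + 1)))).
    { intros n. f_equal. rewrite Nat.add_1_r. simpl. ring. }
    apply (Ccv_shift (fun N => Sx (x * q ^ N))). apply S_lim; auto.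
Qed.

Lemma S_closed x : Good x -> qpoch_inf x q * Sx x = qpoch_inf (b * q * x) q * C0.
Proof.
  intros H. apply (iterate q (b * q) Good Sx x C0 Hq).
  - apply good_q.
  - intros y Hy. apply Ceq_minus. apply (Ex_zero y Hy).
  - exact H.
  - apply S_lim; auto.
Qed.

Lemma C0_val : C0 = qpoch_inf (- b * q) q / qpoch_inf (- q) q.
Proof.
  assert (NZ : qpoch_inf (- q) q <> 0).
  { apply qpoch_inf_nz; auto. intros j. apply Cmod_small_ne1. rewrite Cmod_mult, Cmod_opp, Cmod_pow. apply pow_lt1, Hr0. }
  pose proof (qbinom q b Hq (- q) Hmq). unfold C0.
  replace (- b * q) with (b * - q) by ring. rewrite <- H. field. auto.
Qed.

End Main.

Lemma sum_n_psum (f : nat -> C) n : sum_n f n = psum f (S n).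
Proof.
  induction n as [|n IH].
  - rewrite sum_O. simpl. ring.
  - rewrite sum_Sn, IH. simpl. reflexivity.
Qed.

Theorem mainTheorem3 (q a b : C) :
  0 < Cmod q -> Cmod q < 1 ->
  (forall j : nat, a * q ^ j <> 1) ->
  is_series
    (fun k : nat =>
       qpoch b q k / qpoch q q k
       * (qpoch_inf (a * b ^ 2 * q ^ (2 + k)) (q ^ 2) / qpoch_inf (a * q ^ k) (q ^ 2))
       * ((- 1) ^ k * q ^ k))
    (qpoch_inf (- b * q) q * qpoch_inf (a * b * q) q
       / (qpoch_inf (- q) q * qpoch_inf a q)).
Proof.
  intros Hq0 Hq Ha.
  assert (Hval : Sx q b a = qpoch_inf (- b * q) q * qpoch_inf (a * b * q) q
       / (qpoch_inf (- q) q * qpoch_inf a q)).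
  { assert (NZa : qpoch_inf a q <> 0) by (apply qpoch_inf_nz; auto).
    assert (NZq : qpoch_inf (- q) q <> 0).
    { apply qpoch_inf_nz; auto. intros j. apply Cmod_small_ne1. rewrite Cmod_mult, Cmod_opp, Cmod_pow. apply pow_lt1. split; [apply Cmod_ge_0|auto]. }
    pose proof (S_closed q b Hq a Ha) as H. rewrite (C0_val q b Hq) in H.
    replace (b * q * a) with (a * b * q) in H by ring.
    transitivity ((qpoch_inf a q * Sx q b a) / qpoch_inf a q); [field; auto|]. rewrite H. field. split; auto. }
  unfold is_series. apply Ccv_filterlim. rewrite <- Hval.
  apply (Ccv_ext (fun n => psum (fun k => cc q b k * rr q b a k) (n + 1))).
  { intros n. rewrite sum_n_psum, Nat.add_1_r. apply psum_ext. intros k. unfold cc, rr, dd. ring. }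
  apply Ccv_shift. apply S_cv; auto.
Qed.
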